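(* Let $G$ be a finite group and $p$ the smallest prime divisor of $|G|$. If $G'\not\subseteq Z(G)$ and $|G/C_G(G')|=|G'\cap Z(G)|=p$, then $Z(G)^*\subsetneq C_G(G')$ and $C_G(G')/Z(G)^*$ can be embedded in $G'/(G'\cap Z(G))$.
   Context: $G'$ is the commutator subgroup, $Z(G)$ the center, $C_G(G')$ the centralizer of $G'$ in $G$. Commutators are $[x,y]=xyx^{-1}y^{-1}$; for $x\in G$, $[G,x]=\{[y,x]: y\in G\}$; for a subset $H\subseteq G$, $H^*=\{x\in G : [G,x]\subseteq H\}$. Thus $Z(G)^*=\{x\in G: [G,x]\subseteq Z(G)\}$. *)

(* Defs.v *)
From mathcomp Require Import all_boot all_fingroup all_solvable.
Set Implicit Arguments. Unset Strict Implicit. Unset Printing Implicit Defensive.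
Local Open Scope group_scope.

(* Paper's commutator convention: [x,y] = x y x^-1 y^-1. *)
Definition pcomm (gT : finGroupType) (x y : gT) : gT := x * y * x^-1 * y^-1.

Definition commset (gT : finGroupType) (G : {set gT}) (x : gT) : {set gT} :=
  [set pcomm y x | y in G].

Definition star (gT : finGroupType) (G H : {set gT}) : {set gT} :=
  [set x in G | commset G x \subset H].

(* Main.v *)
Require Import Defs.
From mathcomp Require Import all_boot all_fingroup all_solvable.
Set Implicit Arguments. Unset Strict Implicit. Unset Printing Implicit Defensive.
Local Open Scope group_scope.
Section H.
Variable gT : finGroupType.
Implicit Types a b c d x y z : gT.
Lemma pcommE a b : pcomm a b = [~ a^-1, b^-1].
Proof. by rewrite /pcomm /commg /conjg !invgK !mulgA. Qed.
Lemma pcommV a b : pcomm b a = (pcomm a b)^-1.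
Proof. by rewrite /pcomm !invMg !invgK !mulgA. Qed.
Lemma pcommMl y z x : pcomm (y * z) x = (pcomm z x)^(y^-1) * pcomm y x.
Proof. by rewrite /pcomm /conjg !invMg !invgK !mulgA !mulgKV. Qed.
Lemma pcommMr y x x' : pcomm y (x * x') = pcomm y x * (pcomm y x')^(x^-1).
Proof. by rewrite /pcomm /conjg !invMg !invgK !mulgA !mulgKV. Qed.
Lemma pcommJ a b y : (pcomm a b)^y = pcomm (a^y) (b^y).
Proof. by rewrite /pcomm !conjMg !conjVg. Qed.
Lemma pcomm_cl a b d : commute d a -> commute d b -> pcomm (a * d) b = pcomm a b.
Proof.
move=> da db; rewrite /pcomm invMg !mulgA.
by rewrite -(mulgA a d b) db mulgA mulgK.
Qed.
Lemma pcomm_cr a b e : commute e a -> commute e b -> pcomm a (b * e) = pcomm a b.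
Proof.
move=> ea eb; rewrite pcommV pcomm_cl // -pcommV //.
Qed.
Lemma pcomm1 a b : pcomm a b = 1 -> commute a b.
Proof.
rewrite /pcomm -mulgA -invMg => /eqP; rewrite -eq_mulgV1 => /eqP //.
Qed.
Lemma conjg_fixc a b : commute a b -> a ^ b = a.
Proof. by move=> c; rewrite conjgE c mulKg. Qed.
End H.

Theorem lemma3p3 (gT : finGroupType) (G : {group gT}) (p : nat) :
  p = pdiv #|G| ->
  ~~ (G^`(1) \subset 'Z(G)) ->
  #|G / 'C_G(G^`(1))| = p ->
  #|G^`(1) :&: 'Z(G)| = p ->
  star G 'Z(G) \proper 'C_G(G^`(1)) /\
  exists f : {morphism 'C_G(G^`(1)) / star G 'Z(G) >-> coset_of (G^`(1) :&: 'Z(G))},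
    'injm f /\ f @* ('C_G(G^`(1)) / star G 'Z(G)) \subset G^`(1) / (G^`(1) :&: 'Z(G)).
Proof.
move=> Hp nDZ cardGC _.
set D := G^`(1) in nDZ cardGC *. set Z := 'Z(G) in nDZ *.
set C := 'C_G(D) in cardGC *. set S := star G Z.
have ntG : 1 < #|G|.
  rewrite ltnNge; apply/negP => /card_le1_trivg G1; apply: (negP nDZ).
  by rewrite /D (subset_trans (der_sub 1 G)) // G1 sub1G.
have prp : prime p by rewrite Hp pdiv_prime.
have nDG : G \subset 'N(D) := normal_norm (der_normal 1 G).
have nCG : G \subset 'N(C) by rewrite normsI ?normG ?norms_cent.
have sCG : C \subset G := subsetIl _ _.
have iCG : #|G : C| = p by rewrite -card_quotient.
have sDG : D \subset G := der_sub 1 G.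
have sDC : D \subset C.
  by apply: der1_min => //; apply: cyclic_abelian; apply: prime_cyclic; rewrite cardGC.
have [g Gg nCg] : exists2 g, g \in G & g \notin C.
  apply/subsetPn; apply/negP => sGC; move: cardGC; rewrite quotientS1 // cards1 => p1.
  by rewrite -p1 in prp.
have F : forall H : {group gT}, C \subset H -> H \subset G -> g \in H -> H :=: G.
  move=> H sCH sHG gH.
  have := p_index_maximal sCG; rewrite iCG => /(_ prp) /maxgroupP [_ maxC].
  case: (eqVproper sHG) => // prH.
  move/(maxC H prH): sCH => eHC; rewrite eHC in gH.
  by rewrite gH in nCg.
have nZG : G \subset 'N(Z) := normal_norm (center_normal G).
have in_D : forall a b, a \in G -> b \in G -> pcomm a b \in D.
  by move=> a b Ha Hb; rewrite pcommE /D derg1 mem_commg ?groupV.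
have cDC : forall d c, d \in D -> c \in C -> commute d c.
  move=> d c Hd /setIP [_ /centP cD]; exact/commute_sym/cD.
have ZG : forall z y, z \in Z -> y \in G -> commute z y.
  move=> z y /setIP [_ /centP cG] Hy; have c := cG y Hy.
  exact c.
have sZG : Z \subset G := center_sub G.
have Tgs : forall x, group_set [set y in G | pcomm y x \in Z].
  move=> x; apply/group_setP; split.
    by rewrite inE group1 /pcomm mul1g invg1 mulg1 mulgV group1.
  move=> y z /setIdP [Gy Ty] /setIdP [Gz Tz]; rewrite inE groupM //=.
  by rewrite pcommMl groupM // memJ_norm // (subsetP nZG) ?groupV.
pose T x := Group (Tgs x).
have inS : forall x, x \in S -> x \in G /\ forall y, y \in G -> pcomm y x \in Z.
  move=> x; rewrite inE => /andP [Gx /subsetP sub]; split=> // y Gy.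
  by apply: sub; apply/imsetP; exists y.
have SC : S \subset C.
  apply/subsetP => x /inS [Gx Sx].
  have phiM : {in G &, {morph (fun y => pcomm y x) : y z / y * z}}.
    move=> y z Gy Gz /=; rewrite pcommMl conjg_fixc; last first.
      by apply: commuteV; apply: ZG; rewrite ?Sx ?groupV.
    by rewrite (ZG _ _ (Sx z Gz)) // (subsetP sZG) ?Sx.
  pose phi := @Morphism _ _ G _ phiM.
  have ab : abelian (phi @* G).
    apply: abelianS (center_abelian G); apply/subsetP => _ /morphimP [y _ Gy ->].
    exact: Sx.
  have phiD : phi @* D = 1 by rewrite /D morphim_der //; apply/derG1P.
  rewrite inE Gx; apply/centP => d Dd; apply: commute_sym; apply: pcomm1.
  have : phi d \in phi @* D by rewrite mem_morphim // (subsetP sDG).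
  by rewrite phiD inE => /eqP.
have CCZ : forall c x, c \in C -> x \in C -> pcomm c x \in Z.
  move=> c x Cc Cx; have Gc := subsetP sCG _ Cc; have Gx := subsetP sCG _ Cx.
  rewrite inE (subsetP sDG) ?in_D //; apply/centP => y Gy.
  apply/commgP; rewrite -conjg_fix; apply/eqP.
  have Dc : [~ c, y] \in D by rewrite /D derg1 mem_commg.
  have Dx : [~ x, y] \in D by rewrite /D derg1 mem_commg.
  rewrite pcommJ !conjg_mulR pcomm_cl ?pcomm_cr //.
  - exact: cDC.
  - exact: cDC.
  - exact: cDC.
  - by apply: commuteM; apply: cDC => //; apply: (subsetP sDC).
have KS : forall x, x \in C -> pcomm g x \in Z -> x \in S.
  move=> x Cx gx; have Gx := subsetP sCG _ Cx.
  have TG : T x :=: G.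
    apply: F; last by rewrite inE Gg.
      by apply/subsetP => c Cc; rewrite inE (subsetP sCG) ?CCZ.
    by apply/subsetP => y; rewrite inE => /andP[].
  rewrite inE Gx; apply/subsetP => _ /imsetP [y Gy ->].
  by move: Gy; rewrite -TG inE => /andP[].
have inS2 : forall x y, x \in S -> y \in G -> pcomm x y \in Z.
  by move=> x y /inS [_ Sx] Gy; rewrite pcommV groupV Sx.
split.
  rewrite properE SC /=; apply/negP => sCS; apply: (negP nDZ).
  have TgG : T g :=: G.
    apply: F; last by rewrite inE Gg /pcomm mulgK mulgV group1.
      by apply/subsetP => c Cc; rewrite inE (subsetP sCG) // inS2 ?(subsetP sCS).
    by apply/subsetP => y; rewrite inE => /andP[].
  have all : forall a b, a \in G -> b \in G -> pcomm a b \in Z.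
    move=> a b Ga Gb.
    have TbG : T b :=: G.
      apply: F.
      - by apply/subsetP => c Cc; rewrite inE (subsetP sCG) // inS2 ?(subsetP sCS).
      - by apply/subsetP => y; rewrite inE => /andP[].
      - have : b \in T g by rewrite TgG.
        case/setIdP => _ Zb; apply/setIdP; split => //; by rewrite (pcommV b g) groupV.
    by move: Ga; rewrite -TbG inE => /andP[].
  rewrite /D derg1 /commutator gen_subG; apply/subsetP => _ /imset2P [a b Ga Gb ->].
  by have := pcommE a^-1 b^-1; rewrite !invgK => <-; rewrite all ?groupV.
have nHG : G \subset 'N(D :&: Z).
  exact: normal_norm (normalI (der_normal 1 G) (center_normal G)).
have psiM : {in C &, {morph (fun x => coset (D :&: Z) (pcomm g x)) : x y / x * y}}.
  move=> x y Cx Cy /=; have Gx := subsetP sCG _ Cx; have Gy := subsetP sCG _ Cy.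
  rewrite pcommMr conjg_fixc; last first.
    by apply: commuteV; apply: cDC => //; apply: in_D.
  by rewrite morphM // (subsetP nHG) // (subsetP sDG) // in_D.
pose psi := @Morphism _ _ C _ psiM.
have kerS : 'ker psi = S.
  apply/setP => x; apply/idP/idP => [Kx | Sx].
    have Cx := dom_ker Kx; have Gx := subsetP sCG _ Cx.
    move/(kerP psi Cx): Kx => /= /coset_idr.
    rewrite (subsetP nHG) ?(subsetP sDG) ?in_D // => /(_ isT) /setIP [_ Zx].
    exact: KS.
  have Cx := subsetP SC _ Sx; have Gx := subsetP sCG _ Cx.
  apply/(kerP psi Cx) => /=; apply: coset_id; rewrite inE in_D //.
  by case/inS: Sx => _ ->.
rewrite -kerS.
have [f injf imf] := first_isom psi.
exists f; split => //; rewrite imf.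
apply/subsetP => _ /morphimP [x _ Cx ->] /=.
by rewrite mem_quotient // in_D // (subsetP sCG).
Qed.
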